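(* Let $Z_u > 0$, $Z_{\bar u} \ge 0$, $Z_u^y$ and $Z_{\bar u}^y$ be real numbers with $0 < Z_u^y \le Z_u$ and $0 \le Z_{\bar u}^y \le Z_{\bar u}$, and let $w \ge Z_{\bar u}$. Put $Z_\rho = Z_u + Z_{\bar u}$ and $Z_\rho^y = Z_u^y + Z_{\bar u}^y$. Then \[ \mathrm{KL}\!\left(\mathcal{B}\!\left(\tfrac{Z_u^y}{Z_\rho^y}\right)\,\middle\|\,\mathcal{B}\!\left(\tfrac{Z_u}{Z_\rho}\right)\right) \;\le\; \lg\frac{Z_u + w}{Z_u^y}. \]
   Context: Interpretation (for motivation only): for a leaf $\rho$ of a decision tree, $Z_u, Z_{\bar u}$ are the total boosting weights of assessed (seen) and unassessed (unseen) training examples reaching $\rho$, $Z_u^y, Z_{\bar u}^y$ are the corresponding weights of examples with label $y$, and $w$ is the total unseen weight over all leaves. $\lg$ is the base-2 logarithm with $0\lg 0=0$ and $0\lg(0/0)=0$. $\mathcal{B}(p)$ is the Bernoulli distribution with parameter $p$, and $\mathrm{KL}(\mathcal{B}(p)\|\mathcal{B}(q)) = p\lg\frac{p}{q} + (1-p)\lg\frac{1-p}{1-q}$. *)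

(* Defs.v *)
From Stdlib Require Import Reals.
Open Scope R_scope.

Definition lg (x : R) : R := ln x / ln 2.

Definition xlg (p q : R) : R := if Req_EM_T p 0 then 0 else p * lg (p / q).

Definition KL_bern (p q : R) : R := xlg p q + xlg (1 - p) (1 - q).

(* Main.v *)
Require Import Defs.
From Stdlib Require Import Reals Lra.
Open Scope R_scope.

Lemma ln_le_xm1 x : 0 < x -> ln x <= x - 1.
Proof. intros Hx. pose proof (exp_ineq1_le (ln x)). rewrite exp_ln in H; lra. Qed.

Lemma ln_le' x y : 0 < x -> x <= y -> ln x <= ln y.
Proof. intros Hx [H|H]. - left; now apply ln_increasing. - subst; lra. Qed.

Lemma step t x M : 0 <= t -> 0 < x -> 0 < M -> t * ln x <= t * (x / M - 1) + t * ln M.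
Proof.
  intros Ht Hx HM.
  replace x with ((x / M) * M) at 1 by (field; lra).
  rewrite ln_mult; [|apply Rdiv_lt_0_compat; lra|lra].
  pose proof (ln_le_xm1 (x/M) ltac:(apply Rdiv_lt_0_compat; lra)).
  pose proof (Rmult_le_compat_l t _ _ Ht H). lra.
Qed.

Theorem mainTheorem2 (Zu Zub Zuy Zuby w : R)
  (hZu : 0 < Zu) (hZub : 0 <= Zub)
  (hZuy0 : 0 < Zuy) (hZuy1 : Zuy <= Zu)
  (hZuby0 : 0 <= Zuby) (hZuby1 : Zuby <= Zub)
  (hw : Zub <= w) :
  KL_bern (Zuy / (Zuy + Zuby)) (Zu / (Zu + Zub)) <= lg ((Zu + w) / Zuy).
Proof.
  assert (Hl2 : 0 < ln 2) by (pose proof ln_lt_2; lra).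
  set (a := Zuy) in *; set (b := Zuby) in *; set (c := Zu) in *; set (d := Zub) in *.
  set (M := (c + w) / a).
  assert (HM : 0 < M) by (unfold M; apply Rdiv_lt_0_compat; lra).
  unfold KL_bern, xlg, lg.
  destruct (Req_EM_T (a / (a+b)) 0) as [E|_].
  { exfalso. assert (0 < a/(a+b)) by (apply Rdiv_lt_0_compat; lra). lra. }
  destruct (Req_EM_T (1 - a / (a+b)) 0) as [E|Hb].
  -
    assert (Hb0 : b = 0).
    { assert (a/(a+b) = 1) by lra. apply Rmult_eq_compat_r with (r := a+b) in H.
      field_simplify in H; lra. }
    assert (Hp : a / (a+b) = 1) by (rewrite Hb0; field; lra).
    rewrite Hp, Rplus_0_r, Rmult_1_l. fold M.
    assert (Hi : 0 < / ln 2) by (apply Rinv_0_lt_compat; lra).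
    assert (HL : ln (1 / (c / (c + d))) <= ln M); [apply ln_le'|].
    3:{ apply Rmult_le_compat_r; [lra|exact HL]. }
    + apply Rdiv_lt_0_compat; [lra|]. apply Rdiv_lt_0_compat; lra.
    + unfold M. replace (1 / (c / (c+d))) with ((c+d)/c) by (field; lra).
      apply Rle_trans with ((c+w)/c).
      * unfold Rdiv; apply Rmult_le_compat_r; [left; apply Rinv_0_lt_compat|]; lra.
      * unfold Rdiv; apply Rmult_le_compat_l; [lra|].
        apply Rinv_le_contravar; lra.
  - assert (Hbp : 0 < b).
    { destruct (Req_dec b 0) as [Hb0|]; [|lra]. exfalso; apply Hb.
      rewrite Hb0; field; lra. }
    assert (Hdp : 0 < d) by lra.
    set (p := a/(a+b)) in *.
    set (q := c/(c+d)).
    assert (Hp1 : 1 - p = b/(a+b)) by (unfold p; field; lra).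
    assert (Hq1 : 1 - q = d/(c+d)) by (unfold q; field; lra).
    assert (Hp0 : 0 < p) by (unfold p; apply Rdiv_lt_0_compat; lra).
    assert (Hq0 : 0 < q) by (unfold q; apply Rdiv_lt_0_compat; lra).
    assert (Hp1' : 0 < 1 - p) by (rewrite Hp1; apply Rdiv_lt_0_compat; lra).
    assert (Hq1' : 0 < 1 - q) by (rewrite Hq1; apply Rdiv_lt_0_compat; lra).
    pose proof (step p (p/q) M ltac:(lra) ltac:(apply Rdiv_lt_0_compat; lra) HM) as S1.
    pose proof (step (1-p) ((1-p)/(1-q)) M ltac:(lra) ltac:(apply Rdiv_lt_0_compat; lra) HM) as S2.
    assert (KEY : p * (p/q) + (1-p) * ((1-p)/(1-q)) <= M).
    { rewrite Hp1, Hq1. unfold p, q.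
      replace (a / (a + b) * (a / (a + b) / (c / (c + d))) +
               b / (a + b) * (b / (a + b) / (d / (c + d))))
        with ((c+d)/((a+b)*(a+b)) * (a*a/c + b*b/d)) by (field; lra).
      assert (E1 : a*a/c <= a).
      { apply Rmult_le_reg_r with c; [lra|]. unfold Rdiv.
        rewrite Rmult_assoc, Rinv_l by lra. nra. }
      assert (E2 : b*b/d <= b).
      { apply Rmult_le_reg_r with d; [lra|]. unfold Rdiv.
        rewrite Rmult_assoc, Rinv_l by lra. nra. }
      apply Rle_trans with ((c+d)/((a+b)*(a+b)) * (a+b)).
      { apply Rmult_le_compat_l; [|lra].
        left; apply Rdiv_lt_0_compat; nra. }
      replace ((c+d)/((a+b)*(a+b)) * (a+b)) with ((c+d)/(a+b)) by (field; lra).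
      unfold M. apply Rle_trans with ((c+w)/(a+b)).
      * unfold Rdiv; apply Rmult_le_compat_r; [left; apply Rinv_0_lt_compat|]; lra.
      * unfold Rdiv; apply Rmult_le_compat_l; [lra|].
        apply Rinv_le_contravar; lra. }
    assert (Hfin : p * ln (p/q) + (1-p) * ln ((1-p)/(1-q)) <= ln M).
    { assert (p * (p / q / M - 1) + (1 - p) * ((1 - p) / (1 - q) / M - 1)
              = (p * (p/q) + (1-p) * ((1-p)/(1-q))) / M - 1) by (field; lra).
      assert ((p * (p/q) + (1-p) * ((1-p)/(1-q))) / M <= 1).
      { apply Rmult_le_reg_r with M; [lra|]. unfold Rdiv.
        rewrite Rmult_assoc, Rinv_l by lra. lra. }
      lra. }
    fold M. unfold Rdiv in Hfin |- *.
    assert (Hi : 0 < / ln 2) by (apply Rinv_0_lt_compat; lra).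
    pose proof (Rmult_le_compat_r (/ ln 2) _ _ (Rlt_le _ _ Hi) Hfin). nra.
Qed.
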